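(* Let $G$ be a connected planar graph. Then every minimal $2$-contraction $H$ of $G$ either contains a non-damaged vertex of degree at most $4$, or is $3$-connected.
   Context: All graphs are finite, simple and undirected. A graph $H$ on at least $3$ vertices, together with an edge $u_1u_2\in E(H)$, is a $2$-contraction of $G$ with damaged vertices $u_1,u_2$ if $H\setminus u_1u_2$ (the graph $H$ with the edge $u_1u_2$ removed) is a subgraph of $G$, every vertex $v\in V(H)\setminus\{u_1,u_2\}$ satisfies $d_H(v)=d_G(v)$, and there exists a $(u_1,u_2)$-path in $G$ all of whose internal vertices lie in $V(G)\setminus V(H)$. The non-damaged vertices of $H$ are those of $V(H)\setminus\{u_1,u_2\}$. A $2$-contraction $H'$ of $G$ is smaller than a $2$-contraction $H$ with damaged vertices $\{u_1,u_2\}$ if $V(H')\subsetneq V(H)$ and each of $u_1,u_2$ either does not belong to $V(H')$ or is a damaged vertex of $H'$. A $2$-contraction $H$ of $G$ is minimal if $G$ admits no $2$-contraction smaller than $H$. *)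

(* Defs.v *)
From Stdlib Require Import Reals.
From mathcomp Require Import all_boot.

Set Implicit Arguments.
Unset Strict Implicit.
Unset Printing Implicit Defensive.

Section Graphs.
Variable T : finType.

Definition simple_graph (e : rel T) : Prop :=
  symmetric e /\ irreflexive e.

Definition graph_connected (e : rel T) : Prop :=
  forall x y : T, connect e x y.

Definition deg (r : rel T) (v : T) : nat := #|[set w | r v w]|.

(* Arcs are given by maps R -> R*R
   which are continuous on all of R (any continuous map on [0,1] extends
   constantly to such a map). *)
Definition in01 (t : R) : Prop := Rle R0 t /\ Rle t R1.

Definition planar (e : rel T) : Prop :=
  exists (pos : T -> R * R) (arc : T -> T -> R -> R * R),
    injective pos /\
    (forall x y, e x y ->
       continuity (fun t => fst (arc x y t)) /\
       continuity (fun t => snd (arc x y t)) /\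
       (forall s t, in01 s -> in01 t -> arc x y s = arc x y t -> s = t) /\
       arc x y R0 = pos x /\ arc x y R1 = pos y /\
       (forall z t, in01 t -> arc x y t = pos z -> z = x \/ z = y)) /\
    (forall x y x' y', e x y -> e x' y' ->
       ~ ((x' = x /\ y' = y) \/ (x' = y /\ y' = x)) ->
       forall s t, in01 s -> in01 t -> arc x y s = arc x' y' t ->
       exists z, arc x y s = pos z).

(* H = (VH, eH) with damaged vertices u1, u2 is a 2-contraction of G = (T, e). *)
Definition is_2contraction (e : rel T) (VH : {set T}) (eH : rel T)
    (u1 u2 : T) : Prop :=
  3 <= #|VH| /\
  simple_graph eH /\
  (forall x y, eH x y -> x \in VH /\ y \in VH) /\
  eH u1 u2 /\
  (forall x y, eH x y ->
     ~~ (((x == u1) && (y == u2)) || ((x == u2) && (y == u1))) -> e x y) /\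
  (forall v, v \in VH -> v != u1 -> v != u2 -> deg eH v = deg e v) /\
  (exists p : seq T, path e u1 (rcons p u2) && all (fun x => x \notin VH) p).

Definition smaller_2contraction (VH' : {set T}) (u1' u2' : T)
    (VH : {set T}) (u1 u2 : T) : Prop :=
  VH' \proper VH /\
  (u1 \notin VH' \/ u1 \in [set u1'; u2']) /\
  (u2 \notin VH' \/ u2 \in [set u1'; u2']).

Definition minimal_2contraction (e : rel T) (VH : {set T}) (eH : rel T)
    (u1 u2 : T) : Prop :=
  is_2contraction e VH eH u1 u2 /\
  ~ (exists (VH' : {set T}) (eH' : rel T) (u1' u2' : T),
        is_2contraction e VH' eH' u1' u2' /\
        smaller_2contraction VH' u1' u2' VH u1 u2).

Definition connected_on (S : {set T}) (r : rel T) : Prop :=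
  forall x y, x \in S -> y \in S ->
    connect [rel a b | r a b && (a \in S) && (b \in S)] x y.

Definition three_connected (VH : {set T}) (eH : rel T) : Prop :=
  3 < #|VH| /\
  forall X : {set T}, #|X| < 3 -> connected_on (VH :\: X) eH.

End Graphs.

(* Main.v *)
Require Import Defs.
From Stdlib Require Import Reals.
From mathcomp Require Import all_boot.
From mathcomp Require Import zify.

Set Implicit Arguments.
Unset Strict Implicit.
Unset Printing Implicit Defensive.

Section Claim.
Variables (T : finType) (e eH : rel T) (VH : {set T}) (u1 u2 : T).
Hypothesis se : symmetric e.
Hypothesis ie : irreflexive e.
Hypothesis Gc : graph_connected e.
Hypothesis HC : is_2contraction e VH eH u1 u2.
Hypothesis Hmin : ~ (exists (VH' : {set T}) (eH' : rel T) (u1' u2' : T),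
        is_2contraction e VH' eH' u1' u2' /\
        smaller_2contraction VH' u1' u2' VH u1 u2).
Hypothesis Hdeg : forall v, v \in VH -> v != u1 -> v != u2 -> 4 < deg eH v.

Lemma eHsym : symmetric eH. Proof. by case: HC => _ [[]]. Qed.
Lemma eH_in x y : eH x y -> x \in VH /\ y \in VH.
Proof. by case: HC => _ [_ [H _]]; apply: H. Qed.
Lemma eH12 : eH u1 u2. Proof. by case: HC => _ [_ [_ []]]. Qed.
Lemma eH_sub x y : eH x y ->
     ~~ (((x == u1) && (y == u2)) || ((x == u2) && (y == u1))) -> e x y.
Proof. by case: HC => _ [_ [_ [_ [H _]]]]; apply: H. Qed.
Lemma deg_eq v : v \in VH -> v != u1 -> v != u2 -> deg eH v = deg e v.
Proof. by case: HC => _ [_ [_ [_ [_ [H _]]]]]; apply: H. Qed.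
Lemma P0 : exists p : seq T, path e u1 (rcons p u2) && all (fun x => x \notin VH) p.
Proof. by case: HC => _ [_ [_ [_ [_ [_ H]]]]]. Qed.

Lemma nd_nb v w : v \in VH -> v != u1 -> v != u2 -> e v w -> eH v w.
Proof.
move=> vH n1 n2 evw.
have sub : [set w | eH v w] \subset [set w | e v w].
  apply/subsetP => w'; rewrite !inE => h; apply: eH_sub h _.
  by rewrite (negbTE n1) (negbTE n2).
have eqs : [set w | eH v w] = [set w | e v w].
  apply/eqP; rewrite eqEcard sub /=.
  by have := deg_eq vH n1 n2; rewrite /deg => ->.
have : w \in [set w | e v w] by rewrite inE.
by rewrite -eqs inE.
Qed.

Definition R (X : {set T}) : rel T :=
  [rel a b | eH a b && (a \in VH :\: X) && (b \in VH :\: X)].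

Lemma Rsym X : symmetric (R X).
Proof.
move=> a b; rewrite /R /= eHsym.
by case: (a \in VH :\: X); case: (b \in VH :\: X); rewrite ?andbT ?andbF.
Qed.

Lemma connS X x w : connect (R X) x w -> x \in VH :\: X -> w \in VH :\: X.
Proof.
move/connectP => [p pth ->]; elim: p x pth => //= y p IH x.
by move=> /andP[/andP[/andP[_ _] yS] pth] _; apply: IH.
Qed.

Lemma exitP (r : rel T) (A : {pred T}) x p : path r x p -> x \in A ->
  last x p \notin A -> exists u v, [/\ u \in A, v \notin A & r u v].
Proof.
elim: p x => [|y p IH] x /=; first by move=> _ xA; rewrite xA.
move=> /andP[rxy pth] xA; case: (boolP (y \in A)) => yA; first exact: IH.
by move=> _; exists x, y.
Qed.

Lemma lift1 (W : {set T}) s t : W \subset VH -> eH s t ->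
  exists q, path e s (rcons q t) && all (fun x => x \notin W) q.
Proof.
move=> sW est.
have [p0 /andP[pp0 ap0]] := P0.
have aW : forall q, all (fun x => x \notin VH) q -> all (fun x => x \notin W) q.
  move=> q; apply: sub_all => x; apply: contra; apply: (subsetP sW).
case: (boolP ((s == u1) && (t == u2))) => [/andP[/eqP-> /eqP->]|h1].
  by exists p0; rewrite pp0 aW.
case: (boolP ((s == u2) && (t == u1))) => [/andP[/eqP-> /eqP->]|h2].
  exists (rev p0); rewrite all_rev aW // andbT.
  have := rev_path e u1 (rcons p0 u2).
  rewrite last_rcons belast_rcons rev_cons => ->.
  have Hs : (fun z => e^~ z) =2 e by move=> ? ?; rewrite se.
  by rewrite (eq_path Hs).
exists [::]; rewrite /= !andbT; apply: (eH_sub est).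
by rewrite negb_or h1 h2.
Qed.

Lemma lift (W : {set T}) s q t : W \subset VH -> path eH s (rcons q t) ->
  all (fun x => x \notin W) q ->
  exists q', path e s (rcons q' t) && all (fun x => x \notin W) q'.
Proof.
move=> sW; elim: q s => [|x q IH] s /=.
  by rewrite andbT => est _; apply: lift1.
move=> /andP[esx pth] /andP[xW aq].
have [q1 /andP[p1 a1]] := lift1 sW esx.
have [q2 /andP[p2 a2]] := IH x pth aq.
exists (q1 ++ x :: q2); rewrite all_cat /= a1 xW a2 andbT.
by rewrite -cat_rcons rcons_cat cat_path p1 last_rcons p2.
Qed.

Lemma closure X c0 c w : ~~ connect (R X) c0 u1 -> ~~ connect (R X) c0 u2 ->
  c0 \in VH :\: X -> connect (R X) c0 c -> e c w ->
  connect (R X) c0 w \/ (w \in X /\ w \in VH).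
Proof.
move=> n1 n2 c0S cc ecw.
have cS := connS cc c0S; move: (cS); rewrite inE => /andP[cX cV].
have cu1 : c != u1 by apply: contraNneq n1 => <-.
have cu2 : c != u2 by apply: contraNneq n2 => <-.
have ecw' := nd_nb cV cu1 cu2 ecw.
have [_ wV] := eH_in ecw'.
case: (boolP (w \in X)) => wX; [by right|left].
apply: connect_trans cc (connect1 _).
by rewrite /R /= ecw' cS inE wX wV.
Qed.

Lemma attach X c0 o : ~~ connect (R X) c0 u1 -> ~~ connect (R X) c0 u2 ->
  c0 \in VH :\: X -> ~~ connect (R X) c0 o ->
  exists c w, [/\ connect (R X) c0 c, e c w, w \in X & w \in VH].
Proof.
move=> n1 n2 c0S nco.
have /connectP [p pth lst] := Gc c0 o.
have [|u [v [uC vC euv]]] := exitP (A := [pred w | connect (R X) c0 w]) pth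
   (connect0 _ _); first by rewrite -lst.
case: (closure n1 n2 c0S uC euv) => [vin|[vX vV]]; first by rewrite inE vin in vC.
by exists u, v.
Qed.

Lemma orient X x y : x \in VH :\: X -> y \in VH :\: X -> ~~ connect (R X) x y ->
  exists c0 o, [/\ c0 \in VH :\: X, o \in VH :\: X, ~~ connect (R X) c0 o,
                  ~~ connect (R X) c0 u1 & ~~ connect (R X) c0 u2].
Proof.
move=> xS yS nxy.
have cs := sym_connect_sym (Rsym X).
case: (boolP (connect (R X) x u1)) => [xu1|nx1].
  exists y, x; split => //; first by rewrite cs.
    by apply: contra nxy => yu1; apply: (connect_trans xu1); rewrite cs.
  apply/negP => yu2; move/negP: nxy; apply; apply: (connect_trans xu1).
  rewrite cs; apply: (connect_trans yu2); rewrite cs; apply: connect1.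
  by rewrite /R /= eH12 (connS xu1 xS) (connS yu2 yS).
case: (boolP (connect (R X) x u2)) => [xu2|nx2]; last by exists x, y.
exists y, x; split => //; first by rewrite cs.
  apply/negP => yu1; move/negP: nxy; apply; apply: (connect_trans xu2).
  rewrite cs; apply: (connect_trans yu1); rewrite cs; apply: connect1.
  by rewrite /R /= eHsym eH12 (connS xu2 xS) (connS yu1 yS).
by apply: contra nxy => yu2; apply: (connect_trans xu2); rewrite cs.
Qed.

Lemma big_size c0 (W : {set T}) : c0 \in VH -> c0 != u1 -> c0 != u2 ->
  (forall w, e c0 w -> w \in W) -> 3 <= #|W|.
Proof.
move=> c0V n1 n2 cl.
have := Hdeg c0V n1 n2; rewrite (deg_eq c0V n1 n2) /deg => h.
have sb : [set w | e c0 w] \subset W by apply/subsetP => w; rewrite inE; apply: cl.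
have := subset_leq_card sb; lia.
Qed.

Lemma contra1 X c0 o : ~~ connect (R X) c0 u1 -> ~~ connect (R X) c0 u2 ->
  c0 \in VH :\: X -> o \in VH :\: X -> ~~ connect (R X) c0 o ->
  (forall w w', w \in X -> w \in VH -> w' \in X -> w' \in VH -> w = w') -> False.
Proof.
move=> n1 n2 c0S oS nco Hu.
have [z [a [cz eza aX aV]]] := attach n1 n2 c0S nco.
pose C := [set w | connect (R X) c0 w].
pose VH' := a |: C.
have clos : forall c w, connect (R X) c0 c -> e c w -> w \in VH'.
  move=> c w cc ecw; case: (closure n1 n2 c0S cc ecw) => [cw|[wX wV]].
    by rewrite /VH' !inE cw orbT.
  by rewrite /VH' (Hu _ _ wX wV aX aV) setU11.
have CVH : C \subset VH.
  by apply/subsetP => w; rewrite inE => /connS /(_ c0S); rewrite inE => /andP[].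
have VHs : VH' \subset VH by rewrite subUset sub1set aV CVH.
have oVH' : o \notin VH'.
  rewrite /VH' !inE negb_or nco andbT; apply/eqP => oa; move: oS.
  by rewrite oa inE aX.
move: (c0S); rewrite inE => /andP[_ c0V].
have c01 : c0 != u1 by apply: contraNneq n1 => <-; apply: connect0.
have c02 : c0 != u2 by apply: contraNneq n2 => <-; apply: connect0.
apply: Hmin.
exists VH', [rel p q | e p q && (p \in VH') && (q \in VH')], a, z.
split; last first.
  split; first by apply/properP; split => //; exists o => //; move: oS; rewrite inE => /andP[].
  split.
    case: (boolP (u1 \in VH')) => [h|]; [right|by left].
    by move: h; rewrite /VH' !inE (negbTE n1) orbF => /eqP ->; rewrite eqxx.
  case: (boolP (u2 \in VH')) => [h|]; [right|by left].
  by move: h; rewrite /VH' !inE (negbTE n2) orbF => /eqP ->; rewrite eqxx.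
have zV' : z \in VH' by rewrite /VH' !inE cz orbT.
have aV' : a \in VH' by rewrite /VH' setU11.
split; first by apply: (big_size c0V c01 c02) => w; apply: clos; apply: connect0.
split.
  split; first by move=> p q /=; rewrite se; case: (p \in VH'); case: (q \in VH'); rewrite ?andbT ?andbF.
  by move=> p /=; rewrite ie.
split; first by move=> p q /= /andP[/andP[_ ->] ->].
split; first by rewrite /= se eza aV' zV'.
split; first by move=> p q /= /andP[/andP[-> _] _].
split.
  move=> v; rewrite {1}/VH' !inE => /orP[/eqP ->|vC]; first by rewrite eqxx.
  move=> _ _; rewrite /deg; apply: eq_card => w; rewrite !inE.
  have vV' : v \in VH' by rewrite /VH' !inE vC orbT.
  rewrite /=; case evw: (e v w) => //=; by rewrite vV' (clos v w vC evw).
by exists [::]; rewrite /= se eza.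
Qed.

Lemma sep1 (X : {set T}) : (forall w w', w \in X -> w \in VH -> w' \in X -> w' \in VH -> w = w') ->
  connected_on (VH :\: X) eH.
Proof.
move=> Hu x y xS yS.
case: (boolP (connect (R X) x y)) => // nxy; exfalso.
have [c0 [o [c0S oS nco n1 n2]]] := orient xS yS nxy.
exact: (contra1 n1 n2 c0S oS nco Hu).
Qed.

Lemma nbr (X : {set T}) a b o : a \in X -> a \in VH -> b \in X -> a != b ->
  (forall w, w \in X -> w \in VH -> w = a \/ w = b) ->
  o \in VH :\: X -> exists d, connect (R X) o d /\ eH d a.
Proof.
move=> aX aV bX ab cov oS.
have h1 : forall w w', w \in [set b] -> w \in VH -> w' \in [set b] -> w' \in VH -> w = w'.
  by move=> w w'; rewrite !inE => /eqP -> _ /eqP ->.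
have oS' : o \in VH :\: [set b].
  move: oS; rewrite !inE => /andP[oX ->]; rewrite andbT; apply: contra oX => /eqP ->//.
have aS' : a \in VH :\: [set b] by rewrite !inE aV ab.
have /connectP [p pth lst] := sep1 h1 oS' aS'.
have [|u [v [uC vC euv]]] := exitP (A := [pred w | connect (R X) o w]) pth
   (connect0 _ _).
  by rewrite -lst inE; apply/negP => /connS /(_ oS); rewrite inE aX.
move: euv => /= /andP[/andP[euv uS'] vS']; exists u; split => //.
move: vS'; rewrite !inE => /andP[vb vV].
case: (boolP (v \in X)) => vX.
  by case: (cov v vX vV) => [<-//|vbb]; rewrite vbb eqxx in vb.
move: vC; rewrite inE; apply: contraNeq => _.
apply: (connect_trans uC) (connect1 _).
by rewrite /R /= euv (connS uC oS) !inE vX vV.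
Qed.


Lemma contra2 (X : {set T}) a b c0 o : a \in X -> a \in VH -> b \in X -> b \in VH ->
  a != b -> (forall w, w \in X -> w \in VH -> w = a \/ w = b) ->
  ~~ connect (R X) c0 u1 -> ~~ connect (R X) c0 u2 ->
  c0 \in VH :\: X -> o \in VH :\: X -> ~~ connect (R X) c0 o -> False.
Proof.
move=> aX aV bX bV ab cov n1 n2 c0S oS nco.
have [da [oda eda]] := nbr aX aV bX ab cov oS.
have cov' : forall w, w \in X -> w \in VH -> w = b \/ w = a.
  by move=> w wX wV; case: (cov w wX wV); [right|left].
have ba : b != a by rewrite eq_sym.
have [db [odb edb]] := nbr bX bV aX ba cov' oS.
have cs := sym_connect_sym (Rsym X).
pose C := [set w | connect (R X) c0 w].
pose VH' := a |: (b |: C).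
have clos : forall c w, connect (R X) c0 c -> e c w -> w \in VH'.
  move=> c w cc ecw; case: (closure n1 n2 c0S cc ecw) => [cw|[wX wV]].
    by rewrite /VH' !inE cw !orbT.
  by case: (cov w wX wV) => ->; rewrite /VH' !inE eqxx ?orbT.
have CVH : C \subset VH.
  by apply/subsetP => w; rewrite inE => /connS /(_ c0S); rewrite inE => /andP[].
have VHs : VH' \subset VH by rewrite !subUset !sub1set aV bV CVH.
have inD : forall w, connect (R X) o w -> w \notin VH'.
  move=> w ow; have wS := connS ow oS.
  apply/negP; rewrite /VH' !inE => /or3P[/eqP wa|/eqP wb|cw].
  - by move: wS; rewrite wa inE aX.
  - by move: wS; rewrite wb inE bX.
  - by move/negP: nco; apply; apply: (connect_trans cw); rewrite cs.
have cdd : connect (R X) da db by apply: (connect_trans _ odb); rewrite cs.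
have /connectP [p pth lst] := cdd.
have pH : path eH a (rcons (da :: p) b).
  rewrite /= (eHsym a da) eda rcons_path -lst edb andbT.
  by apply: (sub_path _ pth) => x y /andP[/andP[]].
have aP : all (fun x => x \notin VH') (da :: p).
  apply/allP => w win; apply: inD.
  by have := path_connect pth win => dw; apply: (connect_trans oda dw).
have [q /andP[pq aq]] := lift VHs pH aP.
move: (c0S); rewrite inE => /andP[_ c0V].
have c01 : c0 != u1 by apply: contraNneq n1 => <-; apply: connect0.
have c02 : c0 != u2 by apply: contraNneq n2 => <-; apply: connect0.
have aV' : a \in VH' by rewrite /VH' setU11.
have bV' : b \in VH' by rewrite /VH' !inE eqxx orbT.
apply: Hmin.
exists VH', [rel x y | (e x y || ((x == a) && (y == b)) || ((x == b) && (y == a)))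
                        && (x \in VH') && (y \in VH')], a, b.
split; last first.
  split.
    apply/properP; split => //; exists o; first by move: oS; rewrite inE => /andP[].
    exact: inD (connect0 _ _).
  split.
    case: (boolP (u1 \in VH')) => [h|]; [right|by left].
    by move: h; rewrite /VH' !inE (negbTE n1) orbF.
  case: (boolP (u2 \in VH')) => [h|]; [right|by left].
  by move: h; rewrite /VH' !inE (negbTE n2) orbF.
split; first by apply: (big_size c0V c01 c02) => w; apply: clos; apply: connect0.
split.
  split.
    move=> x y /=; rewrite se; case: (x \in VH'); case: (y \in VH'); rewrite ?andbT ?andbF //.
    case: (e y x) => //=.
    by case: (x =P a); case: (x =P b); case: (y =P a); case: (y =P b).
  move=> x /=; rewrite ie /=; case: (x =P a) => [->|/eqP xa].
    by rewrite (negbTE ab).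
  by rewrite /= andbF.
split; first by move=> x y /= /andP[/andP[_ ->] ->].
split; first by rewrite /= !eqxx /= orbT aV' bV'.
split.
  move=> x y /= /andP[/andP[h _] _] nd; move: h.
  by rewrite -orbA (negbTE nd) orbF.
split.
  move=> v; rewrite {1}/VH' !inE => /or3P[/eqP->|/eqP->|vC].
  - by rewrite eqxx.
  - by move=> _; rewrite eqxx.
  move=> va vb; rewrite /deg; apply: eq_card => w; rewrite !inE /=.
  rewrite (negbTE va) (negbTE vb) /= !orbF.
  have vV' : v \in VH' by rewrite /VH' !inE vC !orbT.
  case evw: (e v w) => //=; by rewrite vV' (clos v w vC evw).
by exists q; rewrite pq aq.
Qed.


Lemma three_sets (X : {set T}) a b w : a \in X -> b \in X -> w \in X ->
  a != b -> w != a -> w != b -> 3 <= #|X|.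
Proof.
move=> aX bX wX ab wa wb.
have sb : [set a; b; w] \subset X.
  by apply/subsetP => x; rewrite !inE => /orP[/orP[]|] /eqP ->.
apply: leq_trans (subset_leq_card sb).
rewrite setUC cardsU1 cards2 !inE negb_or wa wb ab.
done.
Qed.

Lemma main_sep (X : {set T}) : #|X| < 3 -> connected_on (VH :\: X) eH.
Proof.
move=> hX.
case: (boolP [exists a, exists b, [&& a \in X, a \in VH, b \in X, b \in VH & a != b]]).
  move=> /existsP[a /existsP[b /and5P[aX aV bX bV ab]]].
  have cov : forall w, w \in X -> w \in VH -> w = a \/ w = b.
    move=> w wX wV; case: (w =P a) => [|/eqP wa]; [by left|right].
    apply/eqP; apply: contraT => wb.
    by have := three_sets aX bX wX ab wa wb; rewrite leqNgt hX.
  move=> x y xS yS; case: (boolP (connect (R X) x y)) => // nxy; exfalso.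
  have [c0 [o [c0S oS nco n1 n2]]] := orient xS yS nxy.
  exact: (contra2 aX aV bX bV ab cov n1 n2 c0S oS nco).
move/existsPn => hn2; apply: sep1 => w w' wX wV w'X w'V.
apply/eqP; apply: contraT => ww.
by move: (hn2 w) => /existsPn /(_ w'); rewrite wX wV w'X w'V ww.
Qed.

Lemma main_size : 3 < #|VH|.
Proof.
have [v [vV v1 v2]] : exists v, [/\ v \in VH, v != u1 & v != u2].
  case: (boolP [exists v, [&& v \in VH, v != u1 & v != u2]]) => [/existsP[v /and3P[? ? ?]]|/existsPn hn'].
    by exists v.
  exfalso; have sb : VH \subset [set u1; u2].
    apply/subsetP => w wV; move: (hn' w); rewrite wV !inE /= negb_and !negbK.
    by [].
  have h2 : #|[set u1; u2]| <= 2 by rewrite cards2; case: (u1 != u2).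
  case: HC => h3 _; have := subset_leq_card sb; lia.
have := Hdeg vV v1 v2; rewrite /deg => h.
have sb : [set w | eH v w] \subset VH.
  by apply/subsetP => w; rewrite inE => /eH_in [].
have := subset_leq_card sb; lia.
Qed.

End Claim.

Theorem claim8 (T : finType) (e : rel T) :
  simple_graph e -> graph_connected e -> planar e ->
  forall (VH : {set T}) (eH : rel T) (u1 u2 : T),
    minimal_2contraction e VH eH u1 u2 ->
    (exists v, [/\ v \in VH, v != u1, v != u2 & deg eH v <= 4]) \/
    three_connected VH eH.
Proof.
move=> [se ie] Gc _ VH eH u1 u2 [HC Hmin].
case: (boolP [exists v, [&& v \in VH, v != u1, v != u2 & deg eH v <= 4]]).
  by move=> /existsP[v /and4P[? ? ? ?]]; left; exists v.
move/existsPn => hn; right.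
have Hdeg : forall v, v \in VH -> v != u1 -> v != u2 -> 4 < deg eH v.
  by move=> v h1 h2 h3; move: (hn v); rewrite h1 h2 h3 /= -ltnNge.
split; first exact: (main_size HC Hdeg).
move=> X hX; exact: (main_sep se ie Gc HC Hmin Hdeg hX).
Qed.
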